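(* Let $(\omega,c)\in\mathbb{R}^2$ satisfy: $\omega>c^2/4$, or $\omega=c^2/4$ and $c>0$. Then $$\lim_{L\to\infty}\bigl\|\Phi^L_{\omega,c}\bigr\|^2_{L^2(\mathbb{T}_{2L})}=\bigl\|\Phi_{\omega,c}\bigr\|^2_{L^2(\mathbb{R})}.$$
   Context: $\mathbb{T}_{2L}=\mathbb{R}/2L\mathbb{Z}\simeq[-L,L]$. Set $\alpha_0=\tfrac13(4c+\sqrt{48\omega+4c^2})$, $\alpha_1=4\sqrt\omega+2c$, $A(x)=-3x^2+8cx+64\omega$, $L_0(\omega,c)=2\pi/\sqrt{\alpha_0\sqrt{A(\alpha_0)}}$. For $\eta_3\in(\alpha_0,\alpha_1)$ put $\eta_1=\frac{-\eta_3+4c-\sqrt{A(\eta_3)}}{2}$, $\eta_2=\frac{-\eta_3+4c+\sqrt{A(\eta_3)}}{2}$, $k^2=\frac{-\eta_1(\eta_3-\eta_2)}{\eta_3(\eta_2-\eta_1)}\in(0,1)$, $g=\frac{2}{\sqrt{\eta_3(\eta_2-\eta_1)}}$, $\beta^2=-\eta_3k^2/\eta_1$, $T(\eta_3)=4gK(k)$ with $K(k)=\int_0^{\pi/2}(1-k^2\sin^2\theta)^{-1/2}d\theta$. The map $T$ is a strictly increasing bijection of $(\alpha_0,\alpha_1)$ onto $(2L_0,\infty)$; for $L>L_0$ let $\eta_3$ satisfy $T(\eta_3)=2L$, and let $\Phi^L_{\omega,c}>0$ be the $2L$-periodic function with $(\Phi^L_{\omega,c}(x))^2=\eta_3\,\mathrm{dn}^2(\frac{x}{2g};k)/(1+\beta^2\mathrm{sn}^2(\frac{x}{2g};k))$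 on $[-L,L]$ ($\mathrm{sn},\mathrm{dn}$ Jacobi elliptic functions of modulus $k$). $\Phi_{\omega,c}>0$ on $\mathbb{R}$ is given by $\Phi_{\omega,c}^2(x)=\frac{4\omega-c^2}{\sqrt\omega(\cosh(\sqrt{4\omega-c^2}x)-\frac{c}{2\sqrt\omega})}$ if $\omega>c^2/4$, and $\Phi_{\omega,c}^2(x)=\frac{4c}{(cx)^2+1}$ if $\omega=c^2/4,\ c>0$. *)

(* Defs.v *)
From Stdlib Require Import Reals ClassicalEpsilon.
From Coquelicot Require Import Coquelicot.
Open Scope R_scope.

(* The parameter m stands for k^2 (0 <= m < 1). *)

Definition ellipF (phi m : R) : R :=
  RInt (fun th => / sqrt (1 - m * (sin th) ^ 2)) 0 phi.

Definition ellipK (m : R) : R := ellipF (PI / 2) m.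

(* Jacobi amplitude: the inverse of phi |-> F(phi | m)
   (a strictly increasing bijection of R onto R when 0 <= m < 1). *)
Definition jacobi_am (u m : R) : R :=
  epsilon (inhabits 0) (fun phi => ellipF phi m = u).

Definition jacobi_sn (u m : R) : R := sin (jacobi_am u m).
Definition jacobi_dn (u m : R) : R := sqrt (1 - m * (jacobi_sn u m) ^ 2).

Definition alpha0 (w c : R) : R := (4 * c + sqrt (48 * w + 4 * c ^ 2)) / 3.
Definition alpha1 (w c : R) : R := 4 * sqrt w + 2 * c.
Definition Apoly (w c x : R) : R := - 3 * x ^ 2 + 8 * c * x + 64 * w.
Definition L0 (w c : R) : R :=
  2 * PI / sqrt (alpha0 w c * sqrt (Apoly w c (alpha0 w c))).

Definition eta1 (w c e3 : R) : R := (- e3 + 4 * c - sqrt (Apoly w c e3)) / 2.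
Definition eta2 (w c e3 : R) : R := (- e3 + 4 * c + sqrt (Apoly w c e3)) / 2.
Definition ksq (w c e3 : R) : R :=
  (- eta1 w c e3 * (e3 - eta2 w c e3)) / (e3 * (eta2 w c e3 - eta1 w c e3)).
Definition gpar (w c e3 : R) : R := 2 / sqrt (e3 * (eta2 w c e3 - eta1 w c e3)).
Definition betasq (w c e3 : R) : R := - e3 * ksq w c e3 / eta1 w c e3.
Definition Tper (w c e3 : R) : R := 4 * gpar w c e3 * ellipK (ksq w c e3).

(* For L > L0, the eta3 in (alpha0, alpha1) with T(eta3) = 2L
   (unique, since T is a strictly increasing bijection). *)
Definition eta3L (w c L : R) : R :=
  epsilon (inhabits 0)
    (fun e => alpha0 w c < e < alpha1 w c /\ Tper w c e = 2 * L).

(* The positive periodic wave Phi^L_{w,c}; the formula below is 2L-periodic,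
   and on [-L, L] it is the function of the paper. *)
Definition PhiL (w c L x : R) : R :=
  let e3 := eta3L w c L in
  let m := ksq w c e3 in
  let u := x / (2 * gpar w c e3) in
  sqrt (e3 * (jacobi_dn u m) ^ 2 / (1 + betasq w c e3 * (jacobi_sn u m) ^ 2)).

(* ||Phi^L||^2_{L^2(T_{2L})}, T_{2L} identified with [-L, L]. *)
Definition normL2_PhiL_sq (w c L : R) : R :=
  RInt (fun x => (PhiL w c L x) ^ 2) (- L) L.

Definition Phi_sq (w c x : R) : R :=
  if Rlt_dec (c ^ 2 / 4) w then
    (4 * w - c ^ 2) /
      (sqrt w * (cosh (sqrt (4 * w - c ^ 2) * x) - c / (2 * sqrt w)))
  else 4 * c / ((c * x) ^ 2 + 1).

Definition Phi (w c x : R) : R := sqrt (Phi_sq w c x).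

(* Main.v *)
Require Import Defs.
From Stdlib Require Import Reals.
From Coquelicot Require Import Coquelicot.
From Stdlib Require Import Lra Psatz ClassicalEpsilon.
Open Scope R_scope.

Lemma cR_plus (f g : R -> R) x : continuous f x -> continuous g x -> continuous (fun y => f y + g y) x.
Proof. intros; exact (continuous_plus f g x H H0). Qed.
Lemma cR_minus (f g : R -> R) x : continuous f x -> continuous g x -> continuous (fun y => f y - g y) x.
Proof. intros; exact (continuous_minus f g x H H0). Qed.
Lemma cR_mult (f g : R -> R) x : continuous f x -> continuous g x -> continuous (fun y => f y * g y) x.
Proof. intros; exact (continuous_mult f g x H H0). Qed.
Lemma cR_opp (f : R -> R) x : continuous f x -> continuous (fun y => - f y) x.
Proof. intros; exact (continuous_opp f x H). Qed.
Lemma cR_inv (f : R -> R) x : continuous f x -> f x <> 0 -> continuous (fun y => / f y) x.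
Proof. intros; exact (continuous_Rinv_comp f x H H0). Qed.
Lemma cR_div (f g : R -> R) x : continuous f x -> continuous g x -> g x <> 0 -> continuous (fun y => f y / g y) x.
Proof. intros. unfold Rdiv. apply cR_mult; auto. apply cR_inv; auto. Qed.
Lemma cR_sqrt (f : R -> R) x : continuous f x -> continuous (fun y => sqrt (f y)) x.
Proof. intros; exact (continuous_sqrt_comp f x H). Qed.
Lemma cR_atan (f : R -> R) x : continuous f x -> continuous (fun y => atan (f y)) x.
Proof. intros; exact (continuous_atan_comp f x H). Qed.
Lemma cR_abs (f : R -> R) x : continuous f x -> continuous (fun y => Rabs (f y)) x.
Proof. intros; exact (continuous_Rabs_comp f x H). Qed.
Lemma cR_sin (f : R -> R) x : continuous f x -> continuous (fun y => sin (f y)) x.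
Proof. intros; exact (continuous_sin_comp f x H). Qed.
Lemma cR_cos (f : R -> R) x : continuous f x -> continuous (fun y => cos (f y)) x.
Proof. intros; exact (continuous_cos_comp f x H). Qed.
Lemma cR_exp (f : R -> R) x : continuous f x -> continuous (fun y => exp (f y)) x.
Proof. intros; exact (continuous_exp_comp f x H). Qed.
Lemma cR_const (c x : R) : continuous (fun _ : R => c) x.
Proof. exact (continuous_const c x). Qed.
Lemma cR_id (x : R) : continuous (fun y : R => y) x.
Proof. exact (continuous_id x). Qed.
Lemma cR_pow (f : R -> R) n x : continuous f x -> continuous (fun y => f y ^ n) x.
Proof. intros H; induction n; simpl. apply cR_const. apply cR_mult; auto. Qed.

Ltac cont_extra := fail.

Ltac cont1 := lazymatch goal with
  | |- continuous (fun _ => ?c) _ => apply cR_const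
  | |- continuous (fun y => y) _ => apply cR_id
  | |- continuous (fun y => @?f y + @?g y) _ => apply (cR_plus f g)
  | |- continuous (fun y => @?f y - @?g y) _ => apply (cR_minus f g)
  | |- continuous (fun y => @?f y * @?g y) _ => apply (cR_mult f g)
  | |- continuous (fun y => @?f y / @?g y) _ => apply (cR_div f g)
  | |- continuous (fun y => - @?f y) _ => apply (cR_opp f)
  | |- continuous (fun y => / @?f y) _ => apply (cR_inv f)
  | |- continuous (fun y => sqrt (@?f y)) _ => apply (cR_sqrt f)
  | |- continuous (fun y => atan (@?f y)) _ => apply (cR_atan f)
  | |- continuous (fun y => Rabs (@?f y)) _ => apply (cR_abs f)
  | |- continuous (fun y => sin (@?f y)) _ => apply (cR_sin f)
  | |- continuous (fun y => cos (@?f y)) _ => apply (cR_cos f)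
  | |- continuous (fun y => exp (@?f y)) _ => apply (cR_exp f)
  | |- continuous (fun y => @?f y ^ ?n) _ => apply (cR_pow f n)
  | |- continuous _ _ => cont_extra
  end.

Ltac cont := repeat (match goal with |- continuous _ _ => cont1 end).

Goal forall x, 0 < x -> continuous (fun e:R => e * e + sqrt e - e / (e+1) + atan (2*e)^2) x.
intros. cont. lra.
Qed.

Lemma cont_ed (f : R -> R) x : continuous f x ->
  forall eps, 0 < eps -> exists d, 0 < d /\ forall y, Rabs (y - x) < d -> Rabs (f y - f x) < eps.
Proof.
  intros H eps He. apply continuity_pt_filterlim in H.
  destruct (H eps He) as [d [Hd Hy]]. exists d; split; auto.
  intros y Hy'. destruct (Req_dec y x). subst. rewrite Rminus_eq_0, Rabs_R0; auto.
  apply (Hy y). split. split; [exact I|auto]. simpl; unfold R_dist; auto.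
Qed.

Definition good (w c : R) := c ^ 2 / 4 < w \/ (w = c ^ 2 / 4 /\ 0 < c).

Lemma sqrt_sq_eq x : 0 <= x -> sqrt x * sqrt x = x.
Proof. apply sqrt_sqrt. Qed.

Lemma good_s w c : good w c ->
  0 < sqrt w /\ sqrt w * sqrt w = w /\ - 2 * sqrt w < c /\ c <= 2 * sqrt w.
Proof.
  intros [H|[H1 H2]].
  - assert (Hw : 0 < w) by nra.
    pose proof (sqrt_lt_R0 w Hw). pose proof (sqrt_sqrt w (Rlt_le _ _ Hw)).
    repeat split; auto; nra.
  - assert (Hw : 0 < w) by nra.
    pose proof (sqrt_lt_R0 w Hw). pose proof (sqrt_sqrt w (Rlt_le _ _ Hw)).
    repeat split; auto; nra.
Qed.

Lemma good_nondeg w c : c ^ 2 / 4 < w -> c < 2 * sqrt w.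
Proof.
  intros H. assert (Hw : 0 < w) by nra.
  pose proof (sqrt_lt_R0 w Hw). pose proof (sqrt_sqrt w (Rlt_le _ _ Hw)). nra.
Qed.

Lemma good_deg w c : w = c ^ 2 / 4 -> 0 < c -> c = 2 * sqrt w.
Proof.
  intros H1 H2. assert (Hw : 0 < w) by nra.
  pose proof (sqrt_lt_R0 w Hw). pose proof (sqrt_sqrt w (Rlt_le _ _ Hw)). nra.
Qed.

Definition SA w c e := sqrt (Apoly w c e).

Lemma alpha1_pos w c : good w c -> 0 < alpha1 w c.
Proof. intros H; destruct (good_s w c H) as (?&?&?&?); unfold alpha1; lra. Qed.

Lemma alpha0_pos w c : good w c -> 0 < alpha0 w c.
Proof.
  intros H; destruct (good_s w c H) as (?&?&?&?); unfold alpha0.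
  set (S0 := sqrt (48 * w + 4 * c ^ 2)).
  assert (HS0 : S0 * S0 = 48 * w + 4 * c ^ 2) by (apply sqrt_sqrt; nra).
  assert (0 <= S0) by apply sqrt_pos. nra.
Qed.

Lemma alpha01 w c : good w c -> alpha0 w c < alpha1 w c.
Proof.
  intros H; destruct (good_s w c H) as (?&?&?&?); unfold alpha0, alpha1.
  set (S0 := sqrt (48 * w + 4 * c ^ 2)).
  assert (HS0 : S0 * S0 = 48 * w + 4 * c ^ 2) by (apply sqrt_sqrt; nra).
  assert (0 <= S0) by apply sqrt_pos. nra.
Qed.

Lemma A_big w c e : good w c -> 0 < e < alpha1 w c ->
  (e - 4 * c) ^ 2 < Apoly w c e.
Proof.
  intros H He; destruct (good_s w c H) as (?&?&?&?); unfold alpha1, Apoly in *.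
  nra.
Qed.

Lemma SA_facts w c e : good w c -> 0 < e < alpha1 w c ->
  0 < SA w c e /\ SA w c e * SA w c e = Apoly w c e /\ Rabs (e - 4 * c) < SA w c e.
Proof.
  intros H He. pose proof (A_big w c e H He).
  assert (0 < Apoly w c e) by (pose proof (pow2_ge_0 (e - 4*c)); lra).
  unfold SA. split. apply sqrt_lt_R0; auto. split. apply sqrt_sqrt; lra.
  rewrite <- sqrt_Rsqr_abs. apply sqrt_lt_1_alt. split. apply Rle_0_sqr.
  unfold Rsqr; nra.
Qed.

Lemma eta_facts w c e : good w c -> 0 < e < alpha1 w c ->
  eta1 w c e < 0 /\ 0 < eta2 w c e /\ eta2 w c e - eta1 w c e = SA w c e.
Proof.
  intros H He. destruct (SA_facts w c e H He) as (H1&H2&H3).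
  unfold eta1, eta2; fold (SA w c e).
  pose proof (Rle_abs (e - 4*c)). pose proof (Rle_abs (-(e - 4*c))). rewrite Rabs_Ropp in H4.
  repeat split; lra.
Qed.

Lemma eta2_lt w c e : good w c -> alpha0 w c < e < alpha1 w c -> eta2 w c e < e.
Proof.
  intros H He. pose proof (alpha0_pos w c H).
  destruct (SA_facts w c e H ltac:(lra)) as (H1&H2&H3).
  destruct (good_s w c H) as (?&?&?&?).
  unfold eta2; fold (SA w c e). unfold alpha0 in He.
  set (S0 := sqrt (48 * w + 4 * c ^ 2)) in *.
  assert (HS0 : S0 * S0 = 48 * w + 4 * c ^ 2) by (apply sqrt_sqrt; nra).
  assert (0 <= S0) by apply sqrt_pos.
  unfold Apoly in H2.
  assert (3 * e ^ 2 - 8 * c * e + 4 * c ^ 2 - 16 * w > 0) by nra.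
  nra.
Qed.

Definition hh (m th : R) : R := / sqrt (1 - m * (sin th) ^ 2).

Lemma sin2_le1 th : 0 <= sin th ^ 2 <= 1.
Proof. pose proof (SIN_bound th). split. apply pow2_ge_0. nra. Qed.

Lemma hh_arg_pos m th : m < 1 -> 0 < 1 - m * (sin th) ^ 2.
Proof. intros. pose proof (sin2_le1 th). destruct (Rle_lt_dec m 0); nra. Qed.

Lemma hh_cont m th : m < 1 -> continuous (hh m) th.
Proof.
  intros Hm. unfold hh. apply cR_inv. cont.
  apply Rgt_not_eq, sqrt_lt_R0, hh_arg_pos; auto.
Qed.

Lemma hh_ex_RInt m a b : m < 1 -> ex_RInt (hh m) a b.
Proof. intros. apply (@ex_RInt_continuous R_CompleteNormedModule). intros; apply hh_cont; auto. Qed.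

Lemma hh_ge1 m th : 0 <= m < 1 -> 1 <= hh m th.
Proof.
  intros Hm. unfold hh. pose proof (hh_arg_pos m th (proj2 Hm)).
  pose proof (sin2_le1 th).
  assert (sqrt (1 - m * sin th ^ 2) <= 1).
  { assert (0 <= m * sin th ^ 2) by (apply Rmult_le_pos; lra). apply Rle_trans with (sqrt 1); [apply sqrt_le_1_alt; lra | rewrite sqrt_1; lra]. }
  assert (0 < sqrt (1 - m * sin th ^ 2)) by (apply sqrt_lt_R0; auto).
  rewrite <- Rinv_1 at 1. apply Rinv_le_contravar; auto.
Qed.

Lemma hh_pos m th : m < 1 -> 0 < hh m th.
Proof. intros. unfold hh. apply Rinv_0_lt_compat, sqrt_lt_R0, hh_arg_pos; auto. Qed.

Lemma ellipF_eq phi m : ellipF phi m = RInt (hh m) 0 phi.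
Proof. reflexivity. Qed.

Lemma ellipF_derive m phi : m < 1 -> is_derive (fun p => ellipF p m) phi (hh m phi).
Proof.
  intros Hm. apply (is_derive_RInt (hh m) (fun p => ellipF p m) 0 phi).
  - apply filter_forall. intros b. unfold ellipF. apply (@RInt_correct R_CompleteNormedModule). apply hh_ex_RInt; auto.
  - apply hh_cont; auto.
Qed.

Lemma ellipF_cont m phi : m < 1 -> continuous (fun p => ellipF p m) phi.
Proof. intros. exact (@ex_derive_continuous R_AbsRing R_NormedModule (fun p => ellipF p m) phi (ex_intro _ _ (ellipF_derive m phi H))). Qed.

Lemma ellipF_diff m a b : m < 1 -> ellipF b m - ellipF a m = RInt (hh m) a b.
Proof.
  intros. rewrite !ellipF_eq.
  pose proof (RInt_Chasles (hh m) 0 a b (hh_ex_RInt m 0 a H) (hh_ex_RInt m a b H)) as E.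
  rewrite <- E. unfold plus; simpl. ring.
Qed.

Lemma ellipF_grow m a b : 0 <= m < 1 -> a <= b -> b - a <= ellipF b m - ellipF a m.
Proof.
  intros Hm Hab. rewrite ellipF_diff by lra.
  assert (RInt (fun _ => 1) a b = b - a).
  { rewrite RInt_const. unfold scal; simpl; unfold mult; simpl. ring. }
  rewrite <- H. apply RInt_le; auto. apply ex_RInt_const. apply hh_ex_RInt; lra.
  intros; apply hh_ge1; auto.
Qed.

Lemma ellipF_0 m : ellipF 0 m = 0.
Proof. rewrite ellipF_eq. exact (@RInt_point R_CompleteNormedModule 0 (hh m)). Qed.

Lemma ellipF_surj m u : 0 <= m < 1 -> exists phi, ellipF phi m = u.
Proof.
  intros Hm.
  assert (Hc : forall x, continuous (fun p => ellipF p m) x) by (intros; apply ellipF_cont; lra).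
  destruct (Rle_lt_dec 0 u).
  - pose proof (ellipF_grow m 0 u Hm r). rewrite ellipF_0 in H.
    destruct (IVT_gen_consistent (fun p => ellipF p m) 0 u u Hc) as [x [_ Hx]].
    rewrite ellipF_0. rewrite Rmin_left, Rmax_right; lra.
    eauto.
  - pose proof (ellipF_grow m u 0 Hm (Rlt_le _ _ r)). rewrite ellipF_0 in H.
    destruct (IVT_gen_consistent (fun p => ellipF p m) u 0 u Hc) as [x [_ Hx]].
    rewrite ellipF_0. rewrite Rmin_left, Rmax_right; lra.
    eauto.
Qed.

Lemma am_spec u m : 0 <= m < 1 -> ellipF (jacobi_am u m) m = u.
Proof.
  intros Hm. unfold jacobi_am.
  apply (epsilon_spec (inhabits 0) (fun phi => ellipF phi m = u)).
  apply ellipF_surj; auto.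
Qed.

Lemma ellipF_inj m a b : 0 <= m < 1 -> ellipF a m = ellipF b m -> a = b.
Proof.
  intros Hm H. destruct (Rtotal_order a b) as [Hl|[He|Hg]]; auto.
  - pose proof (ellipF_grow m a b Hm (Rlt_le _ _ Hl)); lra.
  - pose proof (ellipF_grow m b a Hm (Rlt_le _ _ Hg)); lra.
Qed.

Lemma am_ellipF phi m : 0 <= m < 1 -> jacobi_am (ellipF phi m) m = phi.
Proof. intros Hm. apply (ellipF_inj m); auto. apply am_spec; auto. Qed.

Lemma am_lip u v m : 0 <= m < 1 -> Rabs (jacobi_am u m - jacobi_am v m) <= Rabs (u - v).
Proof.
  intros Hm. pose proof (am_spec u m Hm). pose proof (am_spec v m Hm).
  set (a := jacobi_am u m) in *. set (b := jacobi_am v m) in *.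
  destruct (Rle_lt_dec a b).
  - pose proof (ellipF_grow m a b Hm r). rewrite H, H0 in H1.
    rewrite !Rabs_left1 by lra; lra.
  - pose proof (ellipF_grow m b a Hm (Rlt_le _ _ r)). rewrite H, H0 in H1.
    rewrite !Rabs_right by lra; lra.
Qed.

Lemma am_cont m u : 0 <= m < 1 -> continuous (fun v => jacobi_am v m) u.
Proof.
  intros Hm. apply continuity_pt_filterlim.
  intros eps He. exists eps; split; auto. intros x [_ Hx].
  simpl in *. unfold R_dist in *.
  eapply Rle_lt_trans. apply am_lip; auto. auto.
Qed.

Lemma hh_even m th : hh m (- th) = hh m th.
Proof. unfold hh. rewrite sin_neg. f_equal. f_equal. ring. Qed.

Lemma ellipF_opp m phi : m < 1 -> ellipF (- phi) m = - ellipF phi m.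
Proof.
  intros Hm. rewrite !ellipF_eq.
  assert (H := is_RInt_comp_opp (hh m) 0 phi (RInt (hh m) 0 (-phi))).
  rewrite Ropp_0 in H. specialize (H (RInt_correct _ _ _ (hh_ex_RInt m 0 (-phi) Hm))).
  apply (@is_RInt_unique R_CompleteNormedModule) in H. rewrite <- H.
  rewrite <- (RInt_opp (hh m)).
  apply RInt_ext. intros. unfold opp; simpl. rewrite hh_even. ring.
  apply hh_ex_RInt; auto.
Qed.

Definition jj (m b2 p : R) := sqrt (1 - m * sin p ^ 2) / (1 + b2 * sin p ^ 2).
Definition PP (e m b2 p : R) := e * (1 - m * sin p ^ 2) / (1 + b2 * sin p ^ 2).

Lemma den_pos b2 p : 0 <= b2 -> 0 < 1 + b2 * sin p ^ 2.
Proof. intros. pose proof (sin2_le1 p). assert (0 <= b2 * sin p ^ 2) by (apply Rmult_le_pos; lra). lra. Qed.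

Lemma jj_cont m b2 p : 0 <= b2 -> continuous (jj m b2) p.
Proof. intros. unfold jj. apply cR_div. cont. cont. apply Rgt_not_eq, den_pos; auto. Qed.

Lemma PP_cont e m b2 p : 0 <= b2 -> continuous (PP e m b2) p.
Proof. intros. unfold PP. apply cR_div. cont. cont. apply Rgt_not_eq, den_pos; auto. Qed.

Lemma jj_ex m b2 a b : 0 <= b2 -> ex_RInt (jj m b2) a b.
Proof. intros. apply (@ex_RInt_continuous R_CompleteNormedModule). intros; apply jj_cont; auto. Qed.

Lemma PhiL_sq_eq w c L e x : eta3L w c L = e -> 0 < e -> 0 < ksq w c e < 1 -> 0 <= betasq w c e ->
  PhiL w c L x ^ 2 = PP e (ksq w c e) (betasq w c e) (jacobi_am (x / (2 * gpar w c e)) (ksq w c e)).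
Proof.
  intros He He0 Hm Hb. unfold PhiL. rewrite He.
  set (m := ksq w c e) in *. set (b2 := betasq w c e) in *. set (u := x / (2 * gpar w c e)) in *.
  unfold jacobi_dn, jacobi_sn. set (sn := sin (jacobi_am u m)).
  assert (Hs : 0 <= sn ^ 2 <= 1) by apply sin2_le1.
  assert (Ha : 0 <= 1 - m * sn ^ 2) by (assert (m * sn ^ 2 <= m * 1) by (apply Rmult_le_compat_l; lra); lra).
  rewrite (pow2_sqrt (1 - m * sn ^ 2) Ha).
  assert (Hd : 0 < 1 + b2 * sn ^ 2) by (assert (0 <= b2 * sn ^ 2) by (apply Rmult_le_pos; lra); lra).
  rewrite pow2_sqrt. unfold PP. fold sn. reflexivity.
  apply Rle_mult_inv_pos; auto. apply Rmult_le_pos; lra.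
Qed.

Lemma normL2_formula w c L e : eta3L w c L = e -> 0 < e -> 0 < ksq w c e < 1 ->
  0 < gpar w c e -> 0 <= betasq w c e -> Tper w c e = 2 * L ->
  normL2_PhiL_sq w c L = 2 * gpar w c e * e * RInt (jj (ksq w c e) (betasq w c e)) (- (PI / 2)) (PI / 2).
Proof.
  intros He He0 Hm Hg Hb HT.
  set (m := ksq w c e) in *. set (b2 := betasq w c e) in *. set (g := gpar w c e) in *.
  assert (Hm' : 0 <= m < 1) by lra.
  unfold normL2_PhiL_sq.
  rewrite (RInt_ext _ (fun x => PP e m b2 (jacobi_am (x / (2 * g)) m))).
  2:{ intros; apply PhiL_sq_eq; auto. }
  assert (HL : L = 2 * g * ellipF (PI / 2) m).
  { unfold Tper, ellipK in HT. fold m g in HT. lra. }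
  assert (HmL : - L = 2 * g * ellipF (- (PI / 2)) m).
  { rewrite ellipF_opp by lra. lra. }
  rewrite HmL. rewrite HL at 1.
  rewrite <- (RInt_comp (fun x => PP e m b2 (jacobi_am (x / (2 * g)) m))
                       (fun p => 2 * g * ellipF p m) (fun p => 2 * g * hh m p)).
  - replace (2 * g * e * RInt (jj m b2) (- (PI / 2)) (PI / 2)) with (scal (2 * g * e) (RInt (jj m b2) (- (PI / 2)) (PI / 2))) by reflexivity.
    rewrite <- (@RInt_scal R_CompleteNormedModule) by (apply jj_ex; auto).
    apply RInt_ext. intros x _.
    replace (2 * g * ellipF x m / (2 * g)) with (ellipF x m) by (field; lra).
    rewrite am_ellipF by auto.
    unfold scal; simpl; unfold mult; simpl.
    unfold PP, jj, hh.
    pose proof (hh_arg_pos m x (proj2 Hm')).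
    set (y := 1 - m * sin x ^ 2) in *.
    pose proof (den_pos b2 x Hb).
    assert (Hsy := sqrt_sqrt y (Rlt_le _ _ H)).
    assert (0 < sqrt y) by (apply sqrt_lt_R0; auto).
    assert (E1 : / sqrt y * y = sqrt y) by (rewrite <- Hsy at 2; field; lra).
    replace (sqrt y / (1 + b2 * sin x ^ 2)) with ((/ sqrt y * y) / (1 + b2 * sin x ^ 2)) by (rewrite E1; reflexivity). field. split; lra.
  - intros x _.
    apply (continuous_comp (fun x => jacobi_am (x / (2 * g)) m) (PP e m b2)).
    apply (continuous_comp (fun x => x / (2 * g)) (fun u => jacobi_am u m)).
    apply cR_div; cont. lra. apply am_cont; auto.
    apply PP_cont; auto.
  - intros x _. split.
    + apply (is_derive_scal (fun p => ellipF p m)). apply ellipF_derive; lra.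
    + apply cR_mult. cont. apply hh_cont; lra.
Qed.

Definition kk (b2 p : R) := cos p / (1 + b2 * sin p ^ 2).

Lemma kk_cont b2 p : 0 <= b2 -> continuous (kk b2) p.
Proof. intros. unfold kk. cont. apply Rgt_not_eq, den_pos; auto. Qed.

Lemma kk_int b2 : 0 < b2 ->
  is_RInt (kk b2) (- (PI / 2)) (PI / 2) (2 * atan (sqrt b2) / sqrt b2).
Proof.
  intros Hb. set (be := sqrt b2).
  assert (Hbe : 0 < be) by (apply sqrt_lt_R0; auto).
  assert (Hbe2 : be * be = b2) by (apply sqrt_sqrt; lra).
  assert (E : 2 * atan be / be = minus ((fun p => atan (be * sin p) / be) (PI / 2))
                                        ((fun p => atan (be * sin p) / be) (- (PI / 2)))).
  { simpl. rewrite sin_neg, sin_PI2. unfold minus, plus, opp; simpl.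
    replace (be * - (1)) with (- be) by ring. rewrite atan_opp. rewrite Rmult_1_r. field. lra. }
  rewrite E. apply (@is_RInt_derive R_CompleteNormedModule (fun p => atan (be * sin p) / be) (kk b2)).
  - intros x _. unfold kk. auto_derive. auto.
    rewrite <- Hbe2. pose proof (den_pos (be*be) x ltac:(nra)). field. split. lra. nra.
  - intros; apply kk_cont; lra.
Qed.

Lemma kk_ex b2 a b : 0 <= b2 -> ex_RInt (kk b2) a b.
Proof. intros. apply (@ex_RInt_continuous R_CompleteNormedModule). intros; apply kk_cont; auto. Qed.

Lemma jk_pt m b2 p : 0 < m < 1 -> 0 < b2 -> - (PI / 2) <= p <= PI / 2 ->
  Rabs (jj m b2 p - kk b2 p) <= sqrt (1 - m) / b2.
Proof.
  intros Hm Hb Hp. unfold jj, kk.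
  set (s := sin p). set (C := cos p).
  assert (HC : 0 <= C) by (apply cos_ge_0; lra).
  assert (HCs : C * C = 1 - s * s) by (unfold C, s; pose proof (sin2_cos2 p); unfold Rsqr in H; lra).
  assert (Hs : 0 <= s ^ 2 <= 1) by apply sin2_le1.
  assert (Hy : 0 < 1 - m * s ^ 2) by (apply hh_arg_pos; lra).
  set (a := sqrt (1 - m * s ^ 2)).
  assert (Ha : a * a = 1 - m * s ^ 2) by (apply sqrt_sqrt; lra).
  assert (Ha0 : 0 <= a) by apply sqrt_pos.
  set (r := sqrt (1 - m)).
  assert (Hr : r * r = 1 - m) by (apply sqrt_sqrt; lra).
  assert (Hr0 : 0 < r) by (apply sqrt_lt_R0; lra).
  assert (HaC : C <= a) by nra.
  assert (Har : r <= a) by nra.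
  assert (Hd1 : (a - C) * r <= r * r * s ^ 2) by nra.
  assert (Hd2 : a - C <= r * s ^ 2) by nra.
  pose proof (den_pos b2 p (Rlt_le _ _ Hb)). fold s in H.
  replace (a / (1 + b2 * s ^ 2) - C / (1 + b2 * s ^ 2)) with ((a - C) / (1 + b2 * s ^ 2)) by (field; lra).
  rewrite Rabs_right.
  2:{ apply Rle_ge, Rle_mult_inv_pos; lra. }
  apply Rle_trans with (r * s ^ 2 / (1 + b2 * s ^ 2)).
  apply Rmult_le_compat_r. left; apply Rinv_0_lt_compat; lra. auto.
  apply (Rmult_le_reg_r (b2 * (1 + b2 * s ^ 2))). nra.
  field_simplify; try lra.
Qed.

Lemma jj_estimate m b2 : 0 < m < 1 -> 0 < b2 ->
  Rabs (RInt (jj m b2) (- (PI / 2)) (PI / 2) - 2 * atan (sqrt b2) / sqrt b2) <= PI * (sqrt (1 - m) / b2).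
Proof.
  intros Hm Hb.
  rewrite <- (is_RInt_unique _ _ _ _ (kk_int b2 Hb)).
  pose proof (RInt_minus (V:=R_CompleteNormedModule) (jj m b2) (kk b2) (- (PI / 2)) (PI / 2)
    (jj_ex m b2 _ _ (Rlt_le _ _ Hb)) (kk_ex b2 _ _ (Rlt_le _ _ Hb))) as E.
  unfold minus, plus, opp in E; simpl in E. unfold Rminus at 1. rewrite <- E.
  eapply Rle_trans. apply abs_RInt_le_const.
  pose proof PI_RGT_0; lra.
  apply (ex_RInt_minus (V:=R_CompleteNormedModule)). apply jj_ex; lra. apply kk_ex; lra.
  intros; apply jk_pt; auto. right; field. lra.
Qed.

Definition Q w c e := 2 * sqrt (e / (e - eta2 w c e)).
Definition Rho w c e := sqrt (SA w c e / (e - eta2 w c e)).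
Definition Rr w c e := eta2 w c e * (e - eta1 w c e) / (e * (e - eta2 w c e)).

Lemma sq_inj x y : 0 <= x -> 0 <= y -> x * x = y * y -> x = y.
Proof. intros. nra. Qed.

Lemma par_facts w c e : good w c -> alpha0 w c < e < alpha1 w c ->
  ksq w c e = - eta1 w c e * (e - eta2 w c e) / (e * SA w c e) /\
  0 < ksq w c e < 1 /\
  1 - ksq w c e = eta2 w c e * (e - eta1 w c e) / (e * SA w c e) /\
  betasq w c e = (e - eta2 w c e) / SA w c e /\ 0 < betasq w c e /\
  gpar w c e = 2 / sqrt (e * SA w c e) /\ 0 < gpar w c e.
Proof.
  intros H He. pose proof (alpha0_pos w c H).
  destruct (eta_facts w c e H ltac:(lra)) as (H1&H2&H3).
  pose proof (eta2_lt w c e H He).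
  destruct (SA_facts w c e H ltac:(lra)) as (H5&_&_).
  assert (Hk : ksq w c e = - eta1 w c e * (e - eta2 w c e) / (e * SA w c e)).
  { unfold ksq. rewrite H3. reflexivity. }
  assert (HeS : 0 < e * SA w c e) by nra.
  split; auto. split.
  { rewrite Hk. split. apply Rdiv_lt_0_compat; nra.
    apply (Rmult_lt_reg_r (e * SA w c e)); auto. field_simplify; try lra. nra. }
  split. { rewrite Hk. field_simplify_eq; try lra. rewrite <- H3. ring. }
  assert (Hb : betasq w c e = (e - eta2 w c e) / SA w c e).
  { unfold betasq. rewrite Hk. field. lra. }
  split; auto. split. rewrite Hb. apply Rdiv_lt_0_compat; lra.
  assert (Hg : gpar w c e = 2 / sqrt (e * SA w c e)) by (unfold gpar; rewrite H3; auto).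
  split; auto. rewrite Hg. apply Rdiv_lt_0_compat. lra. apply sqrt_lt_R0; auto.
Qed.

Lemma main_est w c L e : good w c -> alpha0 w c < e < alpha1 w c ->
  eta3L w c L = e -> Tper w c e = 2 * L ->
  Rabs (normL2_PhiL_sq w c L - 4 * Q w c e * (PI / 2 - atan (Rho w c e)))
    <= 2 * PI * Q w c e * sqrt (Rr w c e).
Proof.
  intros H He HL HT. pose proof (alpha0_pos w c H).
  destruct (par_facts w c e H He) as (Hk & Hk01 & H1k & Hb & Hb0 & Hg & Hg0).
  destruct (eta_facts w c e H ltac:(lra)) as (H1&H2&H3).
  pose proof (eta2_lt w c e H He).
  destruct (SA_facts w c e H ltac:(lra)) as (H5&_&_).
  rewrite (normL2_formula w c L e HL ltac:(lra) Hk01 Hg0 (Rlt_le _ _ Hb0) HT).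
  pose proof (jj_estimate _ _ Hk01 Hb0) as Est.
  set (m := ksq w c e) in *. set (b2 := betasq w c e) in *. set (g := gpar w c e) in *.
  set (S := SA w c e) in *. set (e1 := eta1 w c e) in *. set (e2 := eta2 w c e) in *.
  set (be := sqrt b2).
  assert (Hbe : 0 < be) by (apply sqrt_lt_R0; auto).
  assert (Hbe2 : be * be = b2) by (apply sqrt_sqrt; lra).
  assert (HeS : 0 < e * S) by nra.
  set (sS := sqrt (e * S)).
  assert (HsS : 0 < sS) by (apply sqrt_lt_R0; auto).
  assert (HsS2 : sS * sS = e * S) by (apply sqrt_sqrt; lra).
  assert (HQ : g * e / be = Q w c e).
  { unfold Q. fold e2. apply sq_inj.
    - apply Rle_mult_inv_pos; [apply Rmult_le_pos|]; lra.
    - apply Rmult_le_pos. lra. apply sqrt_pos.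
    - rewrite Hg. replace (2 * sqrt (e / (e - e2)) * (2 * sqrt (e / (e - e2))))
        with (4 * (sqrt (e / (e - e2)) * sqrt (e / (e - e2)))) by ring.
      rewrite sqrt_sqrt by (apply Rlt_le, Rdiv_lt_0_compat; lra).
      fold sS. replace (2 / sS * e / be * (2 / sS * e / be)) with (4 * e * e / ((sS * sS) * (be * be))) by (field; lra).
      rewrite HsS2, Hbe2, Hb. field. repeat split; lra. }
  assert (HRho : / be = Rho w c e).
  { unfold Rho. fold S e2. apply sq_inj.
    - left; apply Rinv_0_lt_compat; auto.
    - apply sqrt_pos.
    - rewrite sqrt_sqrt by (apply Rlt_le, Rdiv_lt_0_compat; lra).
      replace (/ be * / be) with (/ (be * be)) by (field; lra). rewrite Hbe2, Hb. field. lra. }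
  assert (HRr : g * e * sqrt (1 - m) / b2 = Q w c e * sqrt (Rr w c e)).
  { rewrite <- HQ. unfold Rr. fold e1 e2.
    assert (Hm1 : 0 < 1 - m) by lra.
    set (r := sqrt (1 - m)).
    assert (Hr : 0 < r) by (apply sqrt_lt_R0; auto).
    assert (Hr2 : r * r = 1 - m) by (apply sqrt_sqrt; lra).
    assert (HRr0 : 0 < e2 * (e - e1) / (e * (e - e2))).
    { apply Rdiv_lt_0_compat; nra. }
    set (t := sqrt (e2 * (e - e1) / (e * (e - e2)))).
    assert (Ht : 0 < t) by (apply sqrt_lt_R0; auto).
    assert (Ht2 : t * t = e2 * (e - e1) / (e * (e - e2))) by (apply sqrt_sqrt; lra).
    assert (Hrt : r / be = t).
    { apply sq_inj. left; apply Rdiv_lt_0_compat; auto. lra.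
      replace (r / be * (r / be)) with ((r * r) / (be * be)) by (field; lra).
      rewrite Hr2, Hbe2, Ht2, H1k, Hb. field. repeat split; lra. }
    rewrite <- Hrt. rewrite <- Hbe2. field. lra. }
  assert (Hat : atan be = PI / 2 - atan (Rho w c e)).
  { rewrite <- HRho. rewrite atan_inv by auto. ring. }
  rewrite <- Hat.
  replace (2 * g * e * RInt (jj m b2) (- (PI / 2)) (PI / 2) - 4 * Q w c e * atan be)
    with ((2 * g * e) * (RInt (jj m b2) (- (PI / 2)) (PI / 2) - 2 * atan be / be))
    by (rewrite <- HQ; field; lra).
  rewrite Rabs_mult, Rabs_right by nra.
  replace (2 * PI * Q w c e * sqrt (Rr w c e)) with (2 * PI * (Q w c e * sqrt (Rr w c e))) by ring. rewrite <- HRr.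
  apply Rle_trans with (2 * g * e * (PI * (sqrt (1 - m) / b2))).
  apply Rmult_le_compat_l. nra. exact Est.
  right; field. lra.
Qed.

Lemma hh_diff m m0 th k : 0 < k <= 1 -> k <= 1 - m * sin th ^ 2 -> k <= 1 - m0 * sin th ^ 2 ->
  Rabs (hh m th - hh m0 th) <= Rabs (m - m0) / (2 * k ^ 3).
Proof.
  intros Hk Hx Hy. unfold hh.
  set (x := 1 - m * sin th ^ 2) in *. set (y := 1 - m0 * sin th ^ 2) in *.
  set (X := sqrt x). set (Y := sqrt y).
  assert (HX2 : X * X = x) by (apply sqrt_sqrt; lra).
  assert (HY2 : Y * Y = y) by (apply sqrt_sqrt; lra).
  assert (HX0 : 0 <= X) by apply sqrt_pos. assert (HY0 : 0 <= Y) by apply sqrt_pos.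
  assert (HXk : k <= X) by nra. assert (HYk : k <= Y) by nra.
  pose proof (sin2_le1 th) as Hs.
  assert (E : / X - / Y = (Y - X) / (X * Y)) by (field; split; lra).
  rewrite E. rewrite Rabs_div by nra. rewrite (Rabs_right (X * Y)) by nra.
  assert (E2 : Rabs (Y - X) * (X + Y) = Rabs (m - m0) * sin th ^ 2).
  { rewrite <- (Rabs_right (X + Y)) by lra. rewrite <- Rabs_mult.
    rewrite <- (Rabs_right (sin th ^ 2)) by lra. rewrite <- Rabs_mult. f_equal.
    unfold x, y in *. nra. }
  assert (E3 : Rabs (Y - X) <= Rabs (m - m0) / (2 * k)).
  { apply (Rmult_le_reg_r (2 * k)). lra. field_simplify; try lra.
    pose proof (Rabs_pos (Y - X)). pose proof (Rabs_pos (m - m0)).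
    assert (Rabs (m - m0) * sin th ^ 2 <= Rabs (m - m0)) by nra. nra. }
  apply Rle_trans with ((Rabs (m - m0) / (2 * k)) / (X * Y)).
  apply Rmult_le_compat_r. left; apply Rinv_0_lt_compat; nra. auto.
  pose proof (Rabs_pos (m - m0)).
  assert (k * k <= X * Y) by nra.
  apply Rle_trans with ((Rabs (m - m0) / (2 * k)) / (k * k)).
  apply Rmult_le_compat_l. apply Rle_mult_inv_pos; lra.
  apply Rinv_le_contravar. nra. auto.
  right. field. lra.
Qed.

Lemma K_cont m0 : m0 < 1 -> continuous ellipK m0.
Proof.
  intros Hm0. apply continuity_pt_filterlim.
  set (k := Rmin 1 ((1 - m0) / 2)).
  assert (Hk : 0 < k <= 1) by (unfold k; split; [apply Rmin_glb_lt; lra | apply Rmin_l]).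
  assert (Hk2 : k <= (1 - m0) / 2) by apply Rmin_r.
  pose proof PI_RGT_0 as Hpi.
  intros eps He. exists (Rmin ((1 - m0) / 2) (eps * k ^ 3 / PI)). split.
  { apply Rmin_glb_lt. lra. apply Rdiv_lt_0_compat; auto. apply Rmult_lt_0_compat; auto. apply pow_lt; lra. }
  intros m [_ Hm]. simpl in *. unfold R_dist in *.
  assert (Hm1 : Rabs (m - m0) < (1 - m0) / 2) by (eapply Rlt_le_trans; [apply Hm|apply Rmin_l]).
  assert (Hm2 : Rabs (m - m0) < eps * k ^ 3 / PI) by (eapply Rlt_le_trans; [apply Hm|apply Rmin_r]).
  assert (Hmm : m < 1) by (pose proof (Rle_abs (m - m0)); lra).
  change (Rabs (RInt (hh m) 0 (PI / 2) - RInt (hh m0) 0 (PI / 2)) < eps).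
  pose proof (RInt_minus (V:=R_CompleteNormedModule) (hh m) (hh m0) 0 (PI / 2)
    (hh_ex_RInt m _ _ Hmm) (hh_ex_RInt m0 _ _ Hm0)) as E.
  unfold minus, plus, opp in E; simpl in E. unfold Rminus at 1. rewrite <- E.
  eapply Rle_lt_trans. apply abs_RInt_le_const. lra.
  apply (ex_RInt_minus (V:=R_CompleteNormedModule)). apply hh_ex_RInt; lra. apply hh_ex_RInt; lra.
  intros t _. apply (hh_diff m m0 t k Hk).
  { pose proof (sin2_le1 t). destruct (Rle_lt_dec m 0).
    assert (m * sin t ^ 2 <= 0) by (apply Rmult_le_0_r; lra). lra.
    assert (m * sin t ^ 2 <= m) by nra. pose proof (Rle_abs (m - m0)). lra. }
  { pose proof (sin2_le1 t). destruct (Rle_lt_dec m0 0).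
    assert (m0 * sin t ^ 2 <= 0) by (apply Rmult_le_0_r; lra). lra.
    assert (m0 * sin t ^ 2 <= m0) by nra. lra. }
  assert (0 < k ^ 3) by (apply pow_lt; lra).
  apply Rle_lt_trans with ((PI / 2) * ((eps * k ^ 3 / PI) / (2 * k ^ 3))).
  apply Rmult_le_compat. lra. apply Rle_mult_inv_pos. apply Rabs_pos. lra. lra.
  apply Rmult_le_compat_r. left; apply Rinv_0_lt_compat; lra. lra.
  field_simplify; try lra.
Qed.

Lemma K_ge m : 0 <= m < 1 -> PI / 2 <= ellipK m.
Proof.
  intros. unfold ellipK. pose proof (ellipF_grow m 0 (PI / 2) H). rewrite ellipF_0 in H0.
  pose proof PI_RGT_0. lra.
Qed.

Lemma K_ge_ln m : 0 < m < 1 -> - ln (sqrt (1 - m)) <= ellipK m.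
Proof.
  intros Hm. set (r := sqrt (1 - m)).
  assert (Hr : 0 < r) by (apply sqrt_lt_R0; lra).
  assert (Hr2 : r * r = 1 - m) by (apply sqrt_sqrt; lra).
  pose proof PI_RGT_0 as Hpi. pose proof PI2_1 as Hpi1.
  set (F := fun t => - ln (PI / 2 - t + r)).
  assert (HI : is_RInt (fun t => / (PI / 2 - t + r)) 0 (PI / 2) (minus (F (PI / 2)) (F 0))).
  { apply (@is_RInt_derive R_CompleteNormedModule F).
    - intros x Hx. rewrite Rmin_left, Rmax_right in Hx by lra. unfold F. auto_derive. lra. field. lra.
    - intros x Hx. rewrite Rmin_left, Rmax_right in Hx by lra. apply cR_inv. cont. lra. }
  change (- ln r <= RInt (hh m) 0 (PI / 2)).
  apply Rle_trans with (minus (F (PI / 2)) (F 0)).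
  { unfold F, minus, plus, opp; simpl. replace (PI / 2 - PI / 2 + r) with r by ring.
    replace (PI / 2 - 0 + r) with (PI / 2 + r) by ring.
    assert (0 <= ln (PI / 2 + r)). { rewrite <- ln_1. apply ln_le; lra. }
    lra. }
  rewrite <- (is_RInt_unique _ _ _ _ HI).
  apply RInt_le. lra. eexists; exact HI. apply hh_ex_RInt; lra.
  intros t Ht. unfold hh.
  assert (Hy : 0 < 1 - m * sin t ^ 2) by (apply hh_arg_pos; lra).
  apply Rinv_le_contravar. apply sqrt_lt_R0; auto.
  assert (HC : 0 <= cos t) by (apply cos_ge_0; lra).
  assert (Hcs : cos t <= PI / 2 - t).
  { rewrite <- sin_shift. destruct (Req_dec t (PI / 2)).
    subst. replace (PI / 2 - PI / 2) with 0 by ring. rewrite sin_0. lra.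
    left; apply sin_lt_x; lra. }
  assert (sqrt (1 - m * sin t ^ 2) <= cos t + r).
  { rewrite <- (sqrt_Rsqr (cos t + r)) by lra. apply sqrt_le_1_alt.
    pose proof (sin2_cos2 t). unfold Rsqr in *. simpl. nra. }
  lra.
Qed.

Lemma SA_cont w c e : continuous (SA w c) e.
Proof. unfold SA, Apoly. cont. Qed.

Ltac cont_extra ::= lazymatch goal with |- continuous (fun y => SA ?w ?c y) _ => apply (SA_cont w c) end.
Ltac cont2 := cont.

Lemma eta1_eq w c e : eta1 w c e = (- e + 4 * c - SA w c e) / 2.
Proof. reflexivity. Qed.
Lemma eta2_eq w c e : eta2 w c e = (- e + 4 * c + SA w c e) / 2.
Proof. reflexivity. Qed.
Lemma gpar_eq w c e : gpar w c e = 2 / sqrt (e * SA w c e).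
Proof. unfold gpar. rewrite eta1_eq, eta2_eq. f_equal. f_equal. f_equal. field. Qed.
Lemma ksq_eq w c e : ksq w c e =
  - ((- e + 4 * c - SA w c e) / 2) * (e - (- e + 4 * c + SA w c e) / 2) / (e * SA w c e).
Proof. unfold ksq. rewrite eta1_eq, eta2_eq. f_equal. f_equal. field. Qed.

Lemma T_cont w c e : good w c -> 0 < e < alpha1 w c -> continuous (Tper w c) e.
Proof.
  intros H He. destruct (SA_facts w c e H He) as (H1&H2&H3).
  assert (HeS : 0 < e * SA w c e) by nra.
  assert (Hk : ksq w c e < 1).
  { destruct (eta_facts w c e H He) as (E1&E2&E3).
    rewrite ksq_eq. rewrite <- eta1_eq, <- eta2_eq.
    apply (Rmult_lt_reg_r (e * SA w c e)); auto. field_simplify; try lra. nra. }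
  unfold Tper.
  apply cR_mult.
  - apply (continuous_ext (fun e => 4 * (2 / sqrt (e * SA w c e)))).
    intros; rewrite gpar_eq; auto.
    cont; try (apply Rgt_not_eq; lra). apply Rgt_not_eq, sqrt_lt_R0; auto.
  - apply (continuous_comp (ksq w c) ellipK).
    + apply (continuous_ext (fun e => - ((- e + 4 * c - SA w c e) / 2) * (e - (- e + 4 * c + SA w c e) / 2) / (e * SA w c e))).
      intros; rewrite ksq_eq; auto.
      cont; try (apply Rgt_not_eq; lra).
    + apply K_cont; auto.
Qed.

Lemma SA_alpha1 w c : good w c -> SA w c (alpha1 w c) = 4 * sqrt w - 2 * c.
Proof.
  intros H. destruct (good_s w c H) as (?&?&?&?).
  unfold SA, Apoly, alpha1. rewrite <- (sqrt_Rsqr (4 * sqrt w - 2 * c)) by lra.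
  f_equal. unfold Rsqr. nra.
Qed.

Lemma eta2_alpha1 w c : good w c -> eta2 w c (alpha1 w c) = 0.
Proof. intros H. rewrite eta2_eq, SA_alpha1 by auto. unfold alpha1. field. Qed.

Lemma eta1_alpha1 w c : good w c -> eta1 w c (alpha1 w c) = - (4 * sqrt w - 2 * c).
Proof. intros H. rewrite eta1_eq, SA_alpha1 by auto. unfold alpha1. field. Qed.

Definition cmid w c := (alpha0 w c + alpha1 w c) / 2.

Lemma near_alpha1 w c (P : R -> Prop) : good w c ->
  (exists d, 0 < d /\ forall e, Rabs (e - alpha1 w c) < d -> P e) ->
  exists e, cmid w c < e < alpha1 w c /\ P e.
Proof.
  intros H [d [Hd HP]]. pose proof (alpha01 w c H).
  set (t := Rmin d (alpha1 w c - cmid w c)).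
  assert (Ht : 0 < t) by (unfold t, cmid; apply Rmin_glb_lt; lra).
  assert (Ht2 : t <= d) by apply Rmin_l. assert (Ht3 : t <= alpha1 w c - cmid w c) by apply Rmin_r.
  exists (alpha1 w c - t / 2). split. unfold cmid in *; lra.
  apply HP. rewrite Rabs_left; lra.
Qed.

Lemma T_unbounded w c B : good w c -> exists e, cmid w c < e < alpha1 w c /\ B < Tper w c e.
Proof.
  intros H. pose proof (alpha01 w c H) as Ha01. pose proof (alpha0_pos w c H) as Ha0.
  pose proof PI_RGT_0 as Hpi.
  pose proof (alpha1_pos w c H) as Ha1.
  assert (Hin : forall e, cmid w c < e < alpha1 w c -> alpha0 w c < e < alpha1 w c)
    by (unfold cmid; intros; lra).
  destruct H as [Hnd | [Hw Hc]].
  -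
    assert (Hg : good w c) by (left; auto).
    pose proof (good_nondeg w c Hnd). destruct (good_s w c Hg) as (?&?&?&?).
    set (D := 4 * sqrt w - 2 * c).
    assert (HD : 0 < D) by (unfold D; lra).
    set (U := fun e => eta2 w c e * (e - eta1 w c e) / (e * SA w c e)).
    set (G := fun e => 2 / sqrt (e * SA w c e)).
    assert (HSA1 : SA w c (alpha1 w c) = D) by (apply SA_alpha1; auto).
    assert (Hden : 0 < alpha1 w c * SA w c (alpha1 w c)) by (rewrite HSA1; nra).
    assert (HU : continuous (fun e => sqrt (U e)) (alpha1 w c)).
    { unfold U. apply (continuous_ext (fun e => sqrt ((- e + 4 * c + SA w c e) / 2 * (e - (- e + 4 * c - SA w c e) / 2) / (e * SA w c e)))).
      intros; rewrite eta1_eq, eta2_eq; auto. cont; try (apply Rgt_not_eq; lra). }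
    assert (HU0 : sqrt (U (alpha1 w c)) = 0).
    { unfold U. rewrite eta2_alpha1 by auto. unfold Rdiv. rewrite !Rmult_0_l. apply sqrt_0. }
    set (gs := G (alpha1 w c)).
    assert (Hgs : 0 < gs) by (unfold gs, G; apply Rdiv_lt_0_compat; [lra| apply sqrt_lt_R0; auto]).
    assert (HG : continuous G (alpha1 w c)).
    { unfold G. cont. apply Rgt_not_eq, sqrt_lt_R0; auto. }
    set (X := Rabs B / (2 * gs) + 1).
    assert (HX : 0 < X) by (unfold X; pose proof (Rabs_pos B); assert (0 <= Rabs B / (2 * gs)) by (apply Rle_mult_inv_pos; lra); lra).
    destruct (cont_ed _ _ HU (exp (- X)) (exp_pos _)) as [d1 [Hd1 P1]].
    destruct (cont_ed _ _ HG (gs / 2) ltac:(lra)) as [d2 [Hd2 P2]].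
    destruct (near_alpha1 w c (fun e => sqrt (U e) < exp (- X) /\ gs / 2 < G e) Hg) as [e [He [PU PG]]].
    { exists (Rmin d1 d2). split. apply Rmin_glb_lt; auto.
      intros e Hed. split.
      - specialize (P1 e ltac:(eapply Rlt_le_trans; [apply Hed | apply Rmin_l])).
        rewrite HU0, Rminus_0_r in P1. pose proof (Rle_abs (sqrt (U e))). lra.
      - specialize (P2 e ltac:(eapply Rlt_le_trans; [apply Hed | apply Rmin_r])).
        fold gs in P2. pose proof (Rle_abs (- (G e - gs))). rewrite Rabs_Ropp in H4. lra. }
    exists e. split; auto.
    destruct (par_facts w c e Hg (Hin e He)) as (Hk & Hk01 & H1k & Hb & Hb0 & Hgp & Hg0).
    pose proof (K_ge_ln _ Hk01) as HK.
    rewrite H1k in HK. fold (U e) in HK.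
    assert (Hsu : 0 < sqrt (U e)) by (unfold U; rewrite <- H1k; apply sqrt_lt_R0; lra).
    assert (Hln : X < - ln (sqrt (U e))).
    { assert (ln (sqrt (U e)) < - X). { rewrite <- (ln_exp (- X)). apply ln_increasing; auto. } lra. }
    unfold Tper. rewrite Hgp. fold (G e).
    assert (gs * X <= G e * ellipK (ksq w c e) * 2) .
    { apply Rle_trans with (2 * (gs / 2) * X). right; field.
      replace (G e * ellipK (ksq w c e) * 2) with (2 * (G e * ellipK (ksq w c e))) by ring.
      rewrite Rmult_assoc. apply Rmult_le_compat_l. lra. apply Rmult_le_compat; lra. }
    assert (Rabs B < 2 * gs * X).
    { unfold X. rewrite Rmult_plus_distr_l. field_simplify; try lra. }
    pose proof (Rle_abs B). lra.
  -
    assert (Hg : good w c) by (right; auto).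
    pose proof (good_deg w c Hw Hc).
    assert (HSA1 : SA w c (alpha1 w c) = 0) by (rewrite SA_alpha1; auto; lra).
    set (V := fun e => sqrt (e * SA w c e)).
    assert (HV : continuous V (alpha1 w c)) by (unfold V; cont2).
    assert (HV0 : V (alpha1 w c) = 0) by (unfold V; rewrite HSA1, Rmult_0_r; apply sqrt_0).
    set (eps := 4 * PI / (Rabs B + 1)).
    assert (Heps : 0 < eps) by (unfold eps; apply Rdiv_lt_0_compat; [lra | pose proof (Rabs_pos B); lra]).
    destruct (cont_ed _ _ HV eps Heps) as [d1 [Hd1 P1]].
    destruct (near_alpha1 w c (fun e => V e < eps) Hg) as [e [He PV]].
    { exists d1. split; auto. intros e Hed. specialize (P1 e Hed).
      rewrite HV0, Rminus_0_r in P1. pose proof (Rle_abs (V e)). lra. }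
    exists e. split; auto.
    destruct (par_facts w c e Hg (Hin e He)) as (Hk & Hk01 & H1k & Hb & Hb0 & Hgp & Hg0).
    pose proof (K_ge (ksq w c e) ltac:(lra)) as HK.
    destruct (SA_facts w c e Hg ltac:(pose proof (Hin e He); lra)) as (HS & _ & _).
    assert (HV1 : 0 < V e) by (unfold V; apply sqrt_lt_R0; apply Rmult_lt_0_compat; [pose proof (Hin e He); lra | lra]).
    unfold Tper. rewrite Hgp. fold (V e).
    assert (Hge : 4 * PI / V e <= 4 * (2 / V e) * ellipK (ksq w c e)).
    { apply Rle_trans with (4 * (2 / V e) * (PI / 2)). right; field; lra.
      apply Rmult_le_compat_l. apply Rmult_le_pos. lra. apply Rlt_le, Rdiv_lt_0_compat; lra. auto. }
    assert (Rabs B + 1 < 4 * PI / V e).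
    { assert (HB1 : 0 < Rabs B + 1) by (pose proof (Rabs_pos B); lra).
      replace (Rabs B + 1) with (4 * PI / eps) by (unfold eps; field; lra).
      unfold Rdiv. apply Rmult_lt_compat_l. lra.
      apply Rinv_lt_contravar. apply Rmult_lt_0_compat; lra. exact PV. }
    pose proof (Rle_abs B). lra.
Qed.

Lemma eta1_cont w c e : continuous (eta1 w c) e.
Proof. unfold eta1, Apoly. cont. apply Rgt_not_eq; lra. Qed.
Lemma eta2_cont w c e : continuous (eta2 w c) e.
Proof. unfold eta2, Apoly. cont. apply Rgt_not_eq; lra. Qed.

Ltac cont_extra ::= lazymatch goal with
  | |- continuous (fun y => SA ?w ?c y) _ => apply (SA_cont w c)
  | |- continuous (fun y => eta1 ?w ?c y) _ => apply (eta1_cont w c)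
  | |- continuous (fun y => eta2 ?w ?c y) _ => apply (eta2_cont w c)
  end.

Lemma exists_sol w c L : good w c -> Tper w c (cmid w c) < 2 * L ->
  exists e, alpha0 w c < e < alpha1 w c /\ Tper w c e = 2 * L.
Proof.
  intros H HL. pose proof (alpha01 w c H). pose proof (alpha0_pos w c H).
  destruct (T_unbounded w c (2 * L) H) as [eh [Heh HT]].
  destruct (Ranalysis5.IVT_interv (fun x => Tper w c x - 2 * L) (cmid w c) eh) as [z [Hz Hz2]].
  - intros a Ha. apply continuity_pt_filterlim.
    apply (cR_minus (Tper w c) (fun _ => 2 * L)). apply T_cont; auto. unfold cmid in *; lra.
    apply cR_const.
  - lra.
  - lra.
  - lra.
  - exists z. split. unfold cmid in *; lra. lra.
Qed.

Lemma eta3L_spec w c L : good w c -> Tper w c (cmid w c) < 2 * L ->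
  alpha0 w c < eta3L w c L < alpha1 w c /\ Tper w c (eta3L w c L) = 2 * L.
Proof.
  intros H HL. unfold eta3L.
  apply (epsilon_spec (inhabits 0) (fun e => alpha0 w c < e < alpha1 w c /\ Tper w c e = 2 * L)).
  apply exists_sol; auto.
Qed.

Lemma localize w c d : good w c -> 0 < d -> exists M, forall L, M < L ->
  Tper w c (cmid w c) < 2 * L /\ alpha1 w c - d < eta3L w c L.
Proof.
  intros H Hd. pose proof (alpha01 w c H) as Ha01. pose proof (alpha0_pos w c H) as Ha0.
  set (b := Rmax (alpha0 w c) (alpha1 w c - d)).
  assert (Hb1 : alpha0 w c <= b) by apply Rmax_l.
  assert (Hb2 : b < alpha1 w c) by (unfold b; apply Rmax_lub_lt; lra).
  destruct (continuous_ab_maj_consistent (Tper w c) (alpha0 w c) b Hb1) as [Mx [HMx HMx2]].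
  { intros x Hx. apply T_cont; auto. lra. }
  exists (Rmax (Tper w c Mx) (Tper w c (cmid w c)) / 2).
  intros L HL.
  assert (H1 : Tper w c Mx < 2 * L) by (pose proof (Rmax_l (Tper w c Mx) (Tper w c (cmid w c))); lra).
  assert (H2 : Tper w c (cmid w c) < 2 * L) by (pose proof (Rmax_r (Tper w c Mx) (Tper w c (cmid w c))); lra).
  split; auto.
  destruct (eta3L_spec w c L H H2) as [He HT].
  destruct (Rlt_le_dec (alpha1 w c - d) (eta3L w c L)) as [Hlt|Hle]; auto.
  exfalso. assert (eta3L w c L <= b) by (unfold b; eapply Rle_trans; [exact Hle | apply Rmax_r]).
  specialize (HMx (eta3L w c L) ltac:(lra)). lra.
Qed.

Definition lim_l w c := 4 * Q w c (alpha1 w c) * (PI / 2 - atan (Rho w c (alpha1 w c))).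

Lemma limit_part w c : good w c -> is_lim (fun L => normL2_PhiL_sq w c L) p_infty (lim_l w c).
Proof.
  intros H. pose proof (alpha01 w c H) as Ha01. pose proof (alpha0_pos w c H) as Ha0. pose proof (alpha1_pos w c H) as Ha1.
  pose proof (eta2_alpha1 w c H) as He2.
  set (a1 := alpha1 w c) in *. set (l := lim_l w c).
  set (Z := fun e => Rabs (4 * Q w c e * (PI / 2 - atan (Rho w c e)) - l) + 2 * PI * Q w c e * sqrt (Rr w c e)).
  assert (HZ : continuous Z a1).
  { unfold Z, Q, Rho, Rr. cont; try (apply Rgt_not_eq; rewrite He2; lra).
    rewrite He2. apply Rgt_not_eq. apply Rmult_lt_0_compat; lra. }
  assert (HZ0 : Z a1 = 0).
  { unfold Z, Rr. rewrite He2. unfold Rdiv. rewrite !Rmult_0_l, sqrt_0.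
    unfold l, lim_l. fold a1. rewrite Rminus_eq_0, Rabs_R0. ring. }
  apply is_lim_spec. intros eps.
  destruct (cont_ed Z a1 HZ eps (cond_pos eps)) as [d [Hd Pd]].
  destruct (localize w c d H Hd) as [M HM].
  exists M. intros L HL. destruct (HM L HL) as [H1 H2].
  destruct (eta3L_spec w c L H H1) as [He HT].
  pose proof (main_est w c L (eta3L w c L) H He eq_refl HT) as Est.
  set (e := eta3L w c L) in *.
  specialize (Pd e). rewrite HZ0, Rminus_0_r in Pd.
  assert (Hde : Rabs (e - a1) < d) by (fold a1 in He; fold a1 in H2; rewrite Rabs_left; lra).
  specialize (Pd Hde). unfold Z in Pd.
  rewrite Rabs_right in Pd.
  2:{ apply Rle_ge. apply Rplus_le_le_0_compat. apply Rabs_pos.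
      pose proof (Rabs_pos (normL2_PhiL_sq w c L - 4 * Q w c e * (PI / 2 - atan (Rho w c e)))). lra. }
  pose proof (Rabs_triang (normL2_PhiL_sq w c L - 4 * Q w c e * (PI / 2 - atan (Rho w c e)))
                          (4 * Q w c e * (PI / 2 - atan (Rho w c e)) - l)) as Tri.
  replace (normL2_PhiL_sq w c L - 4 * Q w c e * (PI / 2 - atan (Rho w c e)) +
           (4 * Q w c e * (PI / 2 - atan (Rho w c e)) - l)) with (normL2_PhiL_sq w c L - l) in Tri by ring.
  lra.
Qed.

Lemma lim_p (f g t : R -> R) M0 : (forall x, M0 < x -> f x = g (t x)) -> continuous g 0 ->
  (forall eps, 0 < eps -> exists M, forall x, M < x -> Rabs (t x) < eps) ->
  filterlim f (Rbar_locally p_infty) (locally (g 0)).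
Proof.
  intros Hf Hg Ht.
  assert (H : is_lim f p_infty (g 0)).
  { apply is_lim_spec. intros eps.
    destruct (cont_ed g 0 Hg eps (cond_pos eps)) as [d [Hd Pd]].
    destruct (Ht d Hd) as [M HM]. exists (Rmax M M0). intros x Hx.
    rewrite Hf by (pose proof (Rmax_r M M0); lra). apply Pd. rewrite Rminus_0_r.
    apply HM. pose proof (Rmax_l M M0); lra. }
  exact H.
Qed.

Lemma lim_m (f g t : R -> R) M0 : (forall x, x < M0 -> f x = g (t x)) -> continuous g 0 ->
  (forall eps, 0 < eps -> exists M, forall x, x < M -> Rabs (t x) < eps) ->
  filterlim f (Rbar_locally m_infty) (locally (g 0)).
Proof.
  intros Hf Hg Ht.
  assert (H : is_lim f m_infty (g 0)).
  { apply is_lim_spec. intros eps.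
    destruct (cont_ed g 0 Hg eps (cond_pos eps)) as [d [Hd Pd]].
    destruct (Ht d Hd) as [M HM]. exists (Rmin M M0). intros x Hx.
    rewrite Hf by (pose proof (Rmin_r M M0); lra). apply Pd. rewrite Rminus_0_r.
    apply HM. pose proof (Rmin_l M M0); lra. }
  exact H.
Qed.

Lemma RInt_gen_from (F f : R -> R) la lb :
  (forall x, is_derive F x (f x)) -> (forall x, continuous f x) ->
  filterlim F (Rbar_locally m_infty) (locally la) ->
  filterlim F (Rbar_locally p_infty) (locally lb) ->
  is_RInt_gen f (Rbar_locally m_infty) (Rbar_locally p_infty) (lb - la).
Proof.
  intros HD Hc Hm Hp.
  assert (HDe : forall x, Derive F x = f x) by (intros; apply is_derive_unique; auto).
  apply (is_RInt_gen_ext (Derive F)).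
  - apply filter_forall. intros ab x _. apply HDe.
  - apply is_RInt_gen_Derive; auto.
    + apply filter_forall. intros ab x _. eexists; apply HD.
    + apply filter_forall. intros ab x _. apply (continuous_ext f). intros; rewrite HDe; auto. auto.
Qed.

Lemma Q_alpha1 w c : good w c -> Q w c (alpha1 w c) = 2.
Proof.
  intros H. pose proof (alpha1_pos w c H). unfold Q. rewrite eta2_alpha1 by auto.
  rewrite Rminus_0_r, Rdiv_diag by lra. rewrite sqrt_1. ring.
Qed.

Lemma Rho_alpha1 w c : good w c -> Rho w c (alpha1 w c) = sqrt ((4 * sqrt w - 2 * c) / alpha1 w c).
Proof.
  intros H. unfold Rho. rewrite eta2_alpha1, SA_alpha1 by auto. rewrite Rminus_0_r. auto.
Qed.

Lemma deg_case w c : w = c ^ 2 / 4 -> 0 < c ->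
  is_RInt_gen (fun x => Phi w c x ^ 2) (Rbar_locally m_infty) (Rbar_locally p_infty) (lim_l w c).
Proof.
  intros Hw Hc. assert (Hg : good w c) by (right; auto).
  pose proof (good_deg w c Hw Hc) as Hs.
  pose proof PI_RGT_0 as Hpi.
  assert (Hl : lim_l w c = 2 * PI - - (2 * PI)).
  { unfold lim_l. rewrite Q_alpha1, Rho_alpha1 by auto.
    replace (4 * sqrt w - 2 * c) with 0 by lra. unfold Rdiv; rewrite Rmult_0_l, sqrt_0, atan_0. lra. }
  rewrite Hl.
  assert (HPhi : forall x, Phi w c x ^ 2 = 4 * c / ((c * x) ^ 2 + 1)).
  { intros x. unfold Phi, Phi_sq. destruct (Rlt_dec (c ^ 2 / 4) w). lra.
    rewrite pow2_sqrt. auto. apply Rle_mult_inv_pos. lra.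
    pose proof (pow2_ge_0 (c * x)). lra. }
  apply (is_RInt_gen_ext (fun x => 4 * c / ((c * x) ^ 2 + 1))).
  { apply filter_forall. intros ab x _. rewrite HPhi; auto. }
  apply (RInt_gen_from (fun x => 4 * atan (c * x))).
  - intros x. auto_derive; auto. field. pose proof (pow2_ge_0 (c * x)). simpl in *. nra.
  - intros x. cont. pose proof (pow2_ge_0 (c * x)). apply Rgt_not_eq; lra.
  - replace (- (2 * PI)) with ((fun t => - 4 * (PI / 2 - atan t)) 0) by (simpl; rewrite atan_0; lra).
    apply (lim_m _ (fun t => - 4 * (PI / 2 - atan t)) (fun x => / (- (c * x))) 0).
    + intros x Hx. simpl. rewrite atan_inv. rewrite <- (Ropp_involutive (c * x)) at 1.
      rewrite atan_opp. ring. nra.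
    + cont.
    + intros eps He. exists (- / (c * eps)). intros x Hx.
      assert (0 < / (c * eps)) by (apply Rinv_0_lt_compat; nra).
      assert (Hcx : 0 < - (c * x)) by nra.
      rewrite Rabs_right by (left; apply Rinv_0_lt_compat; auto).
      assert (Hy : / eps < - (c * x)).
      { assert (c * x < c * (- / (c * eps))) by (apply Rmult_lt_compat_l; auto).
        replace (c * (- / (c * eps))) with (- / eps) in H0 by (field; lra). lra. }
      rewrite <- (Rinv_inv eps). apply Rinv_lt_contravar; auto.
      apply Rmult_lt_0_compat; auto. apply Rinv_0_lt_compat; auto.
  - replace (2 * PI) with ((fun t => 4 * (PI / 2 - atan t)) 0) by (simpl; rewrite atan_0; lra).
    apply (lim_p _ (fun t => 4 * (PI / 2 - atan t)) (fun x => / (c * x)) 0).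
    + intros x Hx. simpl. rewrite atan_inv. ring. nra.
    + cont.
    + intros eps He. exists (/ (c * eps)). intros x Hx.
      assert (0 < / (c * eps)) by (apply Rinv_0_lt_compat; nra).
      assert (Hcx : 0 < c * x) by nra.
      rewrite Rabs_right by (left; apply Rinv_0_lt_compat; auto).
      assert (Hy : / eps < c * x).
      { assert (c * / (c * eps) < c * x) by (apply Rmult_lt_compat_l; auto).
        replace (c * / (c * eps)) with (/ eps) in H0 by (field; lra). lra. }
      rewrite <- (Rinv_inv eps). apply Rinv_lt_contravar; auto.
      apply Rmult_lt_0_compat; auto. apply Rinv_0_lt_compat; auto.
Qed.

Lemma nondeg_deriv s c a x : 0 < s -> -2 * s < c < 2 * s -> 0 < a -> a * a = 4 * (s * s) - c ^ 2 ->
  is_derive (fun x => 4 * atan (a / (2 * s - c) * ((exp (a * x) - 1) / (exp (a * x) + 1)))) x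
    ((4 * (s * s) - c ^ 2) / (s * (cosh (a * x) - c / (2 * s)))).
Proof.
  intros Hs Hc Ha Ha2.
  assert (HE := exp_pos (a * x)).
  auto_derive. lra.
  unfold cosh. rewrite exp_Ropp. set (E := exp (a * x)) in *.
  set (d := 2 * s - c). set (k := 2 * s + c).
  assert (Hd : 0 < d) by (unfold d; lra). assert (Hk : 0 < k) by (unfold k; lra).
  assert (Hak : a * a = d * k) by (unfold d, k; rewrite Ha2; ring).
  assert (H1 : 0 < s * (E * E + 1) - c * E).
  { replace (s * (E * E + 1) - c * E) with (s * ((E - 1) * (E - 1)) + d * E) by (unfold d; ring).
    assert (0 <= s * ((E - 1) * (E - 1))) by (apply Rmult_le_pos; [lra | apply Rle_0_sqr]).
    assert (0 < d * E) by (apply Rmult_lt_0_compat; lra). lra. }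
  assert (H2 : 0 < d * d * ((E + 1) * (E + 1)) + a * a * ((E - 1) * (E - 1))).
  { assert (0 < d * d * ((E + 1) * (E + 1))) by (apply Rmult_lt_0_compat; apply Rmult_lt_0_compat; lra).
    assert (0 <= a * a * ((E - 1) * (E - 1))) by (apply Rmult_le_pos; apply Rle_0_sqr). lra. }
  transitivity (8 * (a * a) * E * d / (d * d * ((E + 1) * (E + 1)) + a * a * ((E - 1) * (E - 1)))).
  { field. repeat split; try lra. }
  transitivity (2 * E * (a * a) / (s * (E * E + 1) - c * E)).
  { rewrite Hak in H2 |- *. unfold d, k in H2 |- *. field. split; lra.
    }
  rewrite Ha2. field. repeat split; lra.
Qed.

Lemma nondeg_case w c : c ^ 2 / 4 < w ->
  is_RInt_gen (fun x => Phi w c x ^ 2) (Rbar_locally m_infty) (Rbar_locally p_infty) (lim_l w c).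
Proof.
  intros Hw. assert (Hg : good w c) by (left; auto).
  destruct (good_s w c Hg) as (Hs & Hs2 & Hc1 & _).
  pose proof (good_nondeg w c Hw) as Hc2.
  pose proof PI_RGT_0 as Hpi.
  set (s := sqrt w) in *.
  assert (H4 : 0 < 4 * w - c ^ 2) by lra.
  set (a := sqrt (4 * w - c ^ 2)).
  assert (Ha : 0 < a) by (apply sqrt_lt_R0; auto).
  assert (Ha2 : a * a = 4 * (s * s) - c ^ 2) by (unfold a; rewrite sqrt_sqrt; lra).
  set (be := a / (2 * s - c)).
  assert (Hbe : 0 < be) by (apply Rdiv_lt_0_compat; lra).
  assert (Hl : lim_l w c = 4 * atan be - - (4 * atan be)).
  { unfold lim_l. rewrite Q_alpha1, Rho_alpha1 by auto. fold s.
    assert (E : sqrt ((4 * s - 2 * c) / alpha1 w c) = / be).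
    { apply sq_inj. apply sqrt_pos. left; apply Rinv_0_lt_compat; auto.
      rewrite sqrt_sqrt. unfold be, alpha1. fold s.
      replace (/ (a / (2 * s - c)) * / (a / (2 * s - c))) with ((2 * s - c) * (2 * s - c) / (a * a)) by (field; lra).
      rewrite Ha2. field. lra.
      unfold alpha1; fold s. apply Rlt_le, Rdiv_lt_0_compat; lra. }
    rewrite E, atan_inv by auto. lra. }
  rewrite Hl.
  assert (Hpos : forall x, 0 < cosh (a * x) - c / (2 * s)).
  { intros x. assert (1 <= cosh (a * x)).
      { unfold cosh. rewrite exp_Ropp. pose proof (exp_pos (a * x)).
        set (E := exp (a * x)) in *.
        assert (0 <= (E - 1) * (E - 1) / E) by (apply Rle_mult_inv_pos; [apply Rle_0_sqr | lra]).
        replace ((E + / E) / 2) with (1 + (E - 1) * (E - 1) / E / 2) by (field; lra). lra. }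
      assert (c / (2 * s) < 1) by (apply (Rmult_lt_reg_r (2 * s)); [lra | field_simplify; lra]).
      lra. }
  assert (HPhi : forall x, Phi w c x ^ 2 = (4 * (s * s) - c ^ 2) / (s * (cosh (a * x) - c / (2 * s)))).
  { intros x. unfold Phi, Phi_sq. destruct (Rlt_dec (c ^ 2 / 4) w); [|lra].
    fold s a. rewrite Hs2.
    pose proof (Hpos x).
    rewrite pow2_sqrt. auto. apply Rle_mult_inv_pos. lra. apply Rmult_lt_0_compat; lra. }
  apply (is_RInt_gen_ext (fun x => (4 * (s * s) - c ^ 2) / (s * (cosh (a * x) - c / (2 * s))))).
  { apply filter_forall. intros ab x _. rewrite HPhi; auto. }
  apply (RInt_gen_from (fun x => 4 * atan (a / (2 * s - c) * ((exp (a * x) - 1) / (exp (a * x) + 1))))).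
  - intros x. apply nondeg_deriv; auto.
  - intros x. apply (continuous_ext (fun x => (4 * (s * s) - c ^ 2) / (s * ((exp (a * x) + exp (- (a * x))) / 2 - c / (2 * s))))).
    intros; reflexivity.
    pose proof (Hpos x). unfold cosh in H. cont; try (apply Rgt_not_eq; lra).
    apply Rgt_not_eq, Rmult_lt_0_compat; lra.
  - fold be.
    replace (- (4 * atan be)) with ((fun t => 4 * atan (be * ((t - 1) / (t + 1)))) 0)
      by (simpl; replace (be * ((0 - 1) / (0 + 1))) with (- be) by field; rewrite atan_opp; ring).
    apply (lim_m _ (fun t => 4 * atan (be * ((t - 1) / (t + 1)))) (fun x => exp (a * x)) 0).
    + intros x _. reflexivity.
    + cont. lra.
    + intros eps He. exists (ln eps / a). intros x Hx.
      rewrite Rabs_right by (left; apply exp_pos).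
      rewrite <- (exp_ln eps) by auto. apply exp_increasing.
      apply (Rmult_lt_reg_r (/ a)). apply Rinv_0_lt_compat; auto.
      replace (a * x * / a) with x by (field; lra). auto.
  - fold be.
    replace (4 * atan be) with ((fun t => 4 * atan (be * ((1 - t) / (1 + t)))) 0)
      by (simpl; replace (be * ((1 - 0) / (1 + 0))) with be by field; ring).
    apply (lim_p _ (fun t => 4 * atan (be * ((1 - t) / (1 + t)))) (fun x => exp (- (a * x))) 0).
    + intros x _. simpl. rewrite exp_Ropp. pose proof (exp_pos (a * x)).
      f_equal. f_equal. f_equal. field. split; lra.
    + cont. lra.
    + intros eps He. exists (- ln eps / a). intros x Hx.
      rewrite Rabs_right by (left; apply exp_pos).
      rewrite <- (exp_ln eps) by auto. apply exp_increasing.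
      apply (Rmult_lt_reg_r (/ a)). apply Rinv_0_lt_compat; auto.
      replace (- (a * x) * / a) with (- x) by (field; lra).
      replace (ln eps * / a) with (- (- ln eps / a)) by (field; lra). lra.
Qed.


Theorem theorem4p1 (w c : R)
  (Hwc : c ^ 2 / 4 < w \/ (w = c ^ 2 / 4 /\ 0 < c)) :
  exists l : R,
    is_RInt_gen (fun x => (Phi w c x) ^ 2)
      (Rbar_locally m_infty) (Rbar_locally p_infty) l /\
    is_lim (fun L => normL2_PhiL_sq w c L) p_infty l.
Proof.
  exists (lim_l w c). split.
  - destruct Hwc as [H | [H1 H2]].
    + apply nondeg_case; auto.
    + apply deg_case; auto.
  - apply limit_part. exact Hwc.
Qed.
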